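(* Let $F$ be a lean multi-clause-set with $n(F) > 0$. Then $\mathrm{minvdeg}(F) \le \mathrm{N}(\sigma(F))$. More precisely, there exists a variable $v \in \mathrm{var}(F)$ with $\mathrm{vdeg}_F(v) \le \mathrm{N}(\sigma(F))$ and $\mathrm{ld}_F(v) \le \sigma(F)$, $\mathrm{ld}_F(\overline{v}) \le \sigma(F)$.
   Context: Literals come with a fixed-point-free involution $x \mapsto \overline{x}$; variables are the positive literals, $\mathrm{var}(x)$ the underlying variable. A clause is a finite set $C$ of literals with $C \cap \overline{C} = \emptyset$. A multi-clause-set is a map $F$ from clauses to $\mathbb{N}_0$ with finitely many clauses of nonzero multiplicity; its underlying clause-set is the set of clauses with nonzero multiplicity. $\mathrm{var}(F)$ is the set of variables occurring in it, $n(F) = |\mathrm{var}(F)|$, $c(F) = \sum_C F(C)$, $\delta(F) = c(F) - n(F)$. Literal degree $\mathrm{ld}_F(x) = \sum_{C \ni x} F(C)$; $\mathrm{vdeg}_F(v) = \mathrm{ld}_F(v) + \mathrm{ld}_F(\overline{v})$; $\mathrm{minvdeg}(F) = \min_{v \in \mathrm{var}(F)} \mathrm{vdeg}_F(v)$ (and $+\infty$ if $n(F)=0$). Surplus: if $n(F) > 0$, $\sigma(F) = \min_{\emptyset \ne V \subseteq \mathrm{var}(F)} \big( \sum_{C : \mathrm{var}(C) \cap V \ne \emptyset} F(C) - |V| \big)$, and $\sigma(F) = 0$ if $n(F)=0$. A partial assignment is a map $\varphi : V \to \{0,1\}$ for a finite set $V$ of variables, with $\varphi(\overline{v}) = 1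 - \varphi(v)$; it is an autarky for a clause-set $G$ if every clause $C \in G$ containing a literal falsified by $\varphi$ also contains a literal satisfied by $\varphi$. A clause-set $G$ is lean if there is no autarky $\varphi$ for $G$ with $\mathrm{var}(\varphi) \cap \mathrm{var}(G) \ne \emptyset$; a multi-clause-set is lean iff its underlying clause-set is. The function $\mathrm{N} : \mathbb{N} \to \mathbb{N}$ is defined by $\mathrm{N}(1) = 2$ and $\mathrm{N}(k) = \max_{i \in \{2,\dots,k\}} \min(2i, \mathrm{N}(k-i+1)+i)$ for $k \ge 2$. *)

(* Defs.v *)
From HB Require Import structures.
From mathcomp Require Import all_boot all_order all_algebra.
From mathcomp Require Import finmap.
Set Implicit Arguments. Unset Strict Implicit. Unset Printing Implicit Defensive.
Import Order.TTheory GRing.Theory Num.Theory.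

Local Open Scope fset_scope.

(* A literal is a pair (v, b): (v, true) is
   the positive literal v (identified with the variable), (v, false) is its
   complement. *)
Definition var := nat.
Definition lit := (nat * bool)%type.
Definition compl (x : lit) : lit := (x.1, ~~ x.2).
Definition var_of (x : lit) : var := x.1.
Definition poslit (v : var) : lit := (v, true).
Definition neglit (v : var) : lit := (v, false).

Definition clause := {fset lit}.
Definition clause_ok (C : clause) : Prop :=
  forall x, x \in C -> compl x \notin C.

(* A multi-clause-set is a finite multiset of clauses, represented by a list;
   the multiplicity F(C) is [count_mem C F].  Its underlying clause-set is the
   set of list members. *)
Definition mcls := seq clause.
Definition is_mcls (F : mcls) : Prop := forall C, C \in F -> clause_ok C.

Definition mult (F : mcls) (C : clause) : nat := count_mem C F.

Definition varsC (C : clause) : {fset var} := [fset var_of x | x in C].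
Definition vars (F : mcls) : {fset var} := \bigcup_(C <- F) varsC C.

Definition nvar (F : mcls) : nat := #|` vars F|.
Definition ncl (F : mcls) : nat := size F.   (* c(F) = sum of multiplicities *)
Definition deficiency (F : mcls) : int := (ncl F)%:Z - (nvar F)%:Z.

Definition ld (F : mcls) (x : lit) : nat := count (fun C => x \in C) F.
Definition vdeg (F : mcls) (v : var) : nat := ld F (poslit v) + ld F (neglit v).

Definition surplus_of (F : mcls) (V : {fset var}) : int :=
  (count (fun C => varsC C `&` V != fset0) F)%:Z - (#|` V|)%:Z.
Definition surplus (F : mcls) : int :=
  if nvar F == 0%N then 0%R
  else \big[Order.min/surplus_of F (vars F)]_(V <- enum_fset (fpowerset (vars F)) | V != fset0)
         surplus_of F V.

(* partial assignments: a finite domain dom with values f on it *)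
Definition sat_lit (dom : {fset var}) (f : var -> bool) (x : lit) : bool :=
  (var_of x \in dom) && (f (var_of x) == x.2).
Definition fals_lit (dom : {fset var}) (f : var -> bool) (x : lit) : bool :=
  (var_of x \in dom) && (f (var_of x) != x.2).

Definition autarky (dom : {fset var}) (f : var -> bool) (F : mcls) : Prop :=
  forall C, C \in F ->
    (exists2 x, x \in C & fals_lit dom f x) ->
    exists2 y, y \in C & sat_lit dom f y.

Definition lean (F : mcls) : Prop :=
  forall dom f, autarky dom f F -> dom `&` vars F = fset0.

(* The function N : N -> N; N(1) = 2, N(k) = max_{2<=i<=k} min(2i, N(k-i+1)+i).
   Implemented with fuel; fuel k suffices for argument k >= 1.
   (Nfun 0 = 0 is a junk value; N is only defined on positive integers.) *)
Fixpoint Naux (fuel k : nat) : nat :=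
  match fuel with
  | 0 => 0
  | fuel'.+1 =>
      if k <= 1 then 2
      else \max_(2 <= i < k.+1) minn (2 * i) (Naux fuel' (k - i + 1) + i)
  end.
Definition Nfun (k : nat) : nat := Naux k k.

(* Main.v *)
Require Import Defs.
From HB Require Import structures.
From mathcomp Require Import all_boot all_order all_algebra.
From mathcomp Require Import finmap.
From mathcomp Require Import zify.
From Stdlib Require Import Classical.
Import Order.TTheory GRing.Theory Num.Theory.
Set Implicit Arguments. Unset Strict Implicit. Unset Printing Implicit Defensive.


Lemma Naux_fuel f1 : forall k f2, 0 < k -> k <= f1 -> k <= f2 -> Naux f1 k = Naux f2 k.
Proof.
elim: f1 => [|f1 IH] k [|f2] //= hk h1 h2; try lia.
case: ifP => // hk1.
apply: eq_big_nat => i /andP [hi1 hi2].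
congr (minn _ (_ + _)); apply: IH; lia.
Qed.

Lemma Nfun1 : Nfun 1 = 2. Proof. by []. Qed.

Lemma Nfun_rec k : 1 < k ->
  Nfun k = \max_(2 <= i < k.+1) minn (2 * i) (Nfun (k - i + 1) + i).
Proof.
case: k => [|k] // hk; rewrite /Nfun /= ifF; last by lia.
apply: eq_big_nat => i /andP [hi1 hi2].
congr (minn _ (_ + _)); apply: Naux_fuel; lia.
Qed.

Lemma Nfun_term k i : 2 <= i <= k ->
  minn (2 * i) (Nfun (k - i + 1) + i) <= Nfun k.
Proof.
move=> /andP [h1 h2]; rewrite (Nfun_rec (k:=k)); last by lia.
apply: (leq_bigmax_seq (F := fun i => minn (2 * i) (Nfun (k - i + 1) + i))) => //.
rewrite mem_index_iota; lia.
Qed.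

Lemma Nfun_ge k : 0 < k -> k.+1 <= Nfun k /\ 2 <= Nfun k.
Proof.
case: k => [|[|k]] // _.
have := @Nfun_term k.+2 k.+2 (ltac:(lia)).
have -> : k.+2 - k.+2 + 1 = 1 by lia.
rewrite Nfun1; lia.
Qed.

Lemma Nfun_step k : 0 < k -> Nfun k <= Nfun k.+1.
Proof.
elim: k {-2}k (leqnn k) => [|n IH] k hk k0; first lia.
case: k hk k0 => [|[|k]] // hk _.
  have := Nfun_ge (k:=2) isT; rewrite Nfun1; lia.
rewrite (Nfun_rec (k:=k.+2)) //.
apply/bigmax_leqP_seq => i; rewrite mem_index_iota => /andP [h1 h2] _.
apply: leq_trans (Nfun_term (k:=k.+3) (i:=i) (ltac:(lia))).
have : Nfun (k.+2 - i + 1) <= Nfun (k.+2 - i + 1).+1 by apply: IH; lia.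
have -> : k.+3 - i + 1 = (k.+2 - i + 1).+1 by lia.
lia.
Qed.

Lemma Nfun_mono a b : 0 < a -> a <= b -> Nfun a <= Nfun b.
Proof.
move=> ha; elim: b => [|b IH] hab; first lia.
case: (ltngtP a b.+1) => // h; last by rewrite h.
  apply: leq_trans (IH _) (Nfun_step _); lia.
lia.
Qed.


Local Open Scope fset_scope.


Definition touch (T : {fset var}) (C : clause) : bool := varsC C `&` T != fset0.
Definition cnt (F : mcls) (T : {fset var}) : nat := count (touch T) F.
Definition inside (W U : {fset var}) (C : clause) : bool := varsC C `&` W `<=` U.

Lemma touchP T C : reflect (exists2 y, y \in C & var_of y \in T) (touch T C).
Proof.
apply: (iffP (fset0Pn _)).
  move=> [u]; rewrite in_fsetI => /andP [/imfsetP [y /= yC ->] yT].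
  by exists y.
move=> [y yC yT]; exists (var_of y); rewrite in_fsetI yT andbT.
by apply: in_imfset.
Qed.

Lemma insideP W U C :
  reflect (forall y, y \in C -> var_of y \in W -> var_of y \in U) (inside W U C).
Proof.
apply: (iffP (@fsubsetP _ _ _)).
  move=> H y yC yW; apply: H; rewrite in_fsetI yW andbT; exact: in_imfset.
move=> H u; rewrite in_fsetI => /andP [/imfsetP [y /= yC ->] yW]; exact: H.
Qed.

Lemma mem_body_cons (T : eqType) (x y : T) s : x \in s -> x \in y :: s.
Proof. by move=> h; rewrite inE h orbT. Qed.

Lemma count_add_le (F : mcls) (p q r : pred clause) :
  (forall C, C \in F -> p C + q C <= r C) -> count p F + count q F <= count r F.
Proof.
elim: F => [|C F IH] //= H.
have := H C (mem_head _ _).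
have := IH (fun C' h => H C' (@mem_body_cons _ C' C F h)).
lia.
Qed.

Lemma count_le (F : mcls) (p q : pred clause) :
  (forall C, C \in F -> p C -> q C) -> count p F <= count q F.
Proof.
elim: F => [|C F IH] //= H.
have := IH (fun C' h => H C' (@mem_body_cons _ C' C F h)).
have := H C (mem_head _ _). case: (p C); case: (q C) => //=; try lia.
Qed.


Lemma card_sub_le (A B : {fset var}) : A `<=` B -> #|`A| <= #|`B|.
Proof. exact: fsubset_leq_card. Qed.

Lemma hall (n : nat) : forall (W : {fset var}) (K : mcls), #|`W| <= n ->
  (forall U, U `<=` W -> count (inside W U) K <= #|`U|) ->
  exists f : var -> bool, forall C, C \in K -> exists2 y, y \in C & sat_lit W f y.
Proof.
elim: n => [|n IH] W K hW hK.
  have W0 : W = fset0 by apply: cardfs0_eq; lia.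
  have := hK fset0 (fsub0set _); rewrite cardfs0.
  have -> : count (inside W fset0) K = size K.
    rewrite -count_predT; apply: eq_count => C /=.
    by apply/insideP => y _; rewrite W0 inE.
  by case: K {hK} => //= _; exists (fun _ => true).
case: (classic (exists U, [/\ U `<=` W, U != fset0, U != W &
                           count (inside W U) K == #|`U|])).
- move=> [U [sUW U0 UW /eqP cU]].
  have ltU : #|`U| < #|`W| by apply: fproper_ltn_card; rewrite fproperEneq UW sUW.
  have gtU : 0 < #|`U| by rewrite cardfs_gt0.
  have H1 : forall U', U' `<=` U -> count (inside U U') [seq C <- K | inside W U C] <= #|`U'|.
    move=> U' sU'.
    rewrite count_filter.
    apply: leq_trans (hK U' (fsubset_trans sU' sUW)).
    apply: count_le => C _ /andP [/insideP h1 /insideP h2]; apply/insideP => y yC yW.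
    exact: h1 yC (h2 y yC yW).
  have [f1 Hf1] := IH U [seq C <- K | inside W U C] (ltac:(lia)) H1.
  have cWU : #|`W `\` U| = #|`W| - #|`U|.
    by rewrite cardfsD (fsetIidPr sUW).
  have H2 : forall U2, U2 `<=` W `\` U -> count (inside (W `\` U) U2) [seq C <- K | ~~ inside W U C] <= #|`U2|.
    move=> U2 sU2.
    rewrite count_filter.
    have sUU2 : U `|` U2 `<=` W.
      rewrite fsubUset sUW /=; exact: fsubset_trans sU2 (fsubsetDl _ _).
    have h := hK _ sUU2.
    have hc : #|`U `|` U2| <= #|`U| + #|`U2| by rewrite cardfsU; lia.
    have := @count_add_le K (predI (inside (W `\` U) U2) (fun x => ~~ inside W U x))
                (inside W U) (inside W (U `|` U2)).
    move=> /(_ _) H.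
    suff: count (predI (inside (W `\` U) U2) (fun x => ~~ inside W U x)) K +
          count (inside W U) K <= count (inside W (U `|` U2)) K by lia.
    apply: H => C _ /=.
    case hI: (inside W U C) => /=.
      rewrite andbF /=.
      have -> : inside W (U `|` U2) C; last by [].
      apply/insideP => y yC yW; rewrite inE; apply/orP; left.
      exact: (insideP _ _ _ hI) y yC yW.
    case hI2: (inside (W `\` U) U2 C) => //=.
    have -> : inside W (U `|` U2) C; last by [].
    apply/insideP => y yC yW; rewrite inE.
    case yU: (var_of y \in U) => //=.
    apply: (insideP _ _ _ hI2 y yC).
    by rewrite inE yU yW.
  have [f2 Hf2] := IH (W `\` U) [seq C <- K | ~~ inside W U C] (ltac:(lia)) H2.
  exists (fun u => if u \in U then f1 u else f2 u) => C CK.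
  case hI: (inside W U C).
    have [y yC /andP [yU fy]] := Hf1 C (ltac:(by rewrite mem_filter hI CK)).
    exists y => //; rewrite /sat_lit yU /= (fsubsetP sUW _ yU) /=. exact: fy.
  have [y yC /andP [yWU fy]] := Hf2 C (ltac:(by rewrite mem_filter hI CK)).
  move: yWU; rewrite inE => /andP [yU yW].
  exists y => //; rewrite /sat_lit yW /= (negbTE yU). exact: fy.
- move=> Hnt.
  have Hlt : forall U, U `<=` W -> U != fset0 -> U != W ->
             count (inside W U) K < #|`U|.
    move=> U sUW U0 UW; rewrite ltn_neqAle hK // andbT.
    apply/negP => /eqP h; apply: Hnt; exists U; split => //; exact/eqP.
  case: K hK Hlt {Hnt} => [|C0 K'] hK Hlt.
    by exists (fun _ => true).
  have [y0 y0C y0W] : exists2 y0, y0 \in C0 & var_of y0 \in W.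
    apply: NNPP => hn.
    have := hK fset0 (fsub0set _); rewrite cardfs0 /=.
    have -> : inside W fset0 C0; last by [].
    apply/insideP => y yC yW; exfalso; apply: hn; by exists y.
  set w := var_of y0.
  pose W' := W `\` [fset w].
  have cW' : #|`W| = (#|`W'| + 1)%N.
    have h1 : W `&` [fset w] = [fset w] by apply/fsetIidPr; rewrite fsub1set.
    have h2 : 0 < #|`W| by rewrite cardfs_gt0; apply/fset0Pn; exists w.
    rewrite cardfsD h1 cardfs1; lia.
  have sizeK : size (C0 :: K') <= #|`W|.
    have := hK W (fsubset_refl _).
    have -> // : count (inside W W) (C0 :: K') = size (C0 :: K').
    rewrite -count_predT; apply: eq_count => C /=.
    by apply/insideP.
  have H3 : forall U, U `<=` W' -> count (inside W' U) K' <= #|`U|.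
    move=> U sU.
    case: (eqVneq U W') => [->|UW'].
      apply: leq_trans (count_size _ _) _; move: sizeK => /=; move: cW'; move: #|`W| #|`W'| => a b; lia.
    have sUp : w |` U `<=` W.
      rewrite fsubUset fsub1set y0W /=; exact: fsubset_trans sU (fsubsetDl _ _).
    have Up0 : w |` U != fset0.
      by apply/fset0Pn; exists w; rewrite !inE eqxx.
    have UpW : w |` U != W.
      apply/eqP => h; move/negP: UW'; apply; rewrite eqEfsubset sU /=.
      apply/fsubsetP => u; rewrite !inE => /andP [uw uW].
      move: uW; rewrite -h !inE; case/orP => // /eqP ue; by rewrite ue eqxx in uw.
    have := Hlt _ sUp Up0 UpW.
    rewrite cardfsU1 /=.
    have : count (inside W' U) K' <= count (inside W (w |` U)) (C0 :: K').
      apply: leq_trans (_ : _ <= count (inside W (w |` U)) K') _; last first.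
        by rewrite /=; lia.
      apply: count_le => C _ /insideP h; apply/insideP => y yC yW.
      rewrite !inE; case: eqP => //= nyw; apply: h yC _.
      by rewrite !inE yW andbT; apply/eqP.
    case: (w \notin U) => /=; move: (inside W (w |` U) C0) => [] /=; lia.
  have [f' Hf'] := IH W' K' (ltac:(lia)) H3.
  exists (fun u => if u == w then y0.2 else f' u) => C.
  rewrite inE => /orP [/eqP ->|CK].
    by exists y0 => //; rewrite /sat_lit y0W /= eqxx.
  have [y yC /andP [yW fy]] := Hf' C CK.
  move: yW; rewrite !inE => /andP [yw yW].
  exists y => //; rewrite /sat_lit yW /= (negbTE yw). exact: fy.
Qed.


Definition relLean (F : mcls) (V : {fset var}) : Prop :=
  forall (D : {fset var}) (f : var -> bool), D `<=` V -> D != fset0 ->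
  ~ (forall C, C \in F -> touch D C -> exists2 y, y \in C & sat_lit D f y).

Lemma relLean_sub F V V' : V' `<=` V -> relLean F V -> relLean F V'.
Proof. move=> s h D f sD D0; apply: h D0; exact: fsubset_trans sD s. Qed.

Lemma touch_sub Z T C : Z `<=` T -> touch Z C -> touch T C.
Proof.
move=> s /touchP [y yC yZ]; apply/touchP; exists y => //; exact: (fsubsetP s).
Qed.

Lemma cardD_sub (T U : {fset var}) : U `<=` T -> #|`T `\` U| = (#|`T| - #|`U|)%N.
Proof. by move=> s; rewrite cardfsD (fsetIidPr s). Qed.

Lemma card_le_sub (T U : {fset var}) : U `<=` T -> (#|`U| <= #|`T|)%N.
Proof. exact: fsubset_leq_card. Qed.

Lemma ex_min_nat (P : nat -> Prop) : (exists n, P n) ->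
  exists m, P m /\ forall k, P k -> (m <= k)%N.
Proof.
move=> [n Pn].
suff: forall N n, (n <= N)%N -> P n -> exists m, P m /\ forall k, P k -> (m <= k)%N.
  by move=> /(_ n n (leqnn n) Pn).
elim=> [|N IH] k hk Pk.
  exists k; split => // j _; lia.
case: (classic (exists j, P j /\ (j < k)%N)).
  move=> [j [Pj hj]]; apply: (IH j) => //; lia.
move=> hn; exists k; split => // j Pj; case: (ltnP j k) => // hj.
exfalso; apply: hn; by exists j.
Qed.

Lemma ex_min_card (P : {fset var} -> Prop) : (exists T, P T) ->
  exists T, P T /\ forall T', P T' -> (#|`T| <= #|`T'|)%N.
Proof.
move=> [T PT].
have [m [[T0 [PT0 hT0]] hm]] := @ex_min_nat (fun m => exists T, P T /\ #|`T| = m)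
   (ex_intro _ _ (ex_intro _ T (conj PT erefl))).
exists T0; split => // T' PT'; rewrite hT0; apply: hm; by exists T'.
Qed.

Lemma notouch (Z W U : {fset var}) C : Z `<=` W ->
  (forall u, u \in Z -> u \notin U) -> inside W U C -> ~~ touch Z C.
Proof.
move=> sZ hZ /insideP hi; apply/negP => /touchP [y yC yZ].
have := hZ _ yZ; rewrite (hi y yC (fsubsetP sZ _ yZ)) //.
Qed.

Lemma pos F V : relLean F V -> forall T, T `<=` V -> T != fset0 -> (#|`T| < cnt F T)%N.
Proof.
move=> hL T.
move: {2}#|`T| (leqnn #|`T|) => n; elim: n T => [|n IH] T hn sT T0.
  by move: T0; rewrite -cardfs_gt0; lia.
rewrite ltnNge; apply/negP => hc.
have [f Hf] : exists f : var -> bool, forall C, C \in [seq C <- F | touch T C] ->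
    exists2 y, y \in C & sat_lit T f y.
  apply: (hall (n := #|`T|)) => // U sU.
  rewrite count_filter.
  case: (eqVneq U T) => [->|UT].
    apply: leq_trans hc; apply: count_le => C' _ /andP [] //.
  case: (eqVneq U fset0) => [->|U0].
    rewrite cardfs0; rewrite leqn0 -(negbK (_ == 0)) -lt0n -has_count.
    apply/hasP => [[C' _ /andP [h1 h2]]].
    have hZ0 : forall u, u \in T -> u \notin (fset0 : {fset var}) by move=> u _; rewrite in_fset0.
    by move: (notouch (fsubset_refl _) hZ0 h1); rewrite h2.
  have sZ : T `\` U `<=` T by exact: fsubsetDl.
  have cZ := cardD_sub sU.
  have ltU : (#|`U| < #|`T|)%N by apply: fproper_ltn_card; rewrite fproperEneq UT sU.
  have gtU : (0 < #|`U|)%N by rewrite cardfs_gt0.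
  have Z0 : T `\` U != fset0 by rewrite -cardfs_gt0 cZ; lia.
  have hZ := IH (T `\` U) (ltac:(lia)) (fsubset_trans sZ sT) Z0.
  have := @count_add_le F (predI (inside T U) (fun C0 => touch T C0)) (touch (T `\` U)) (touch T).
  move=> /(_ _) H.
  have: (count (predI (inside T U) (fun C0 => touch T C0)) F + count (touch (T `\` U)) F
         <= count (touch T) F)%N.
    apply: H => C' _ /=.
    case h1: (inside T U C') => /=; last first.
      by case hz: (touch (T `\` U) C') => //; rewrite (touch_sub sZ hz).
    have hZU : forall u, u \in T `\` U -> u \notin U by move=> u; rewrite inE; case/andP.
    have := notouch sZ hZU h1.
    by move/negbTE => ->; case: (touch T C').
  rewrite /cnt in hZ hc; lia.
apply: (hL T f sT T0) => C CF hCT.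
apply: (Hf C); by rewrite mem_filter hCT CF.
Qed.


Lemma touch_lit (T : {fset var}) (x : lit) C : x \in C -> var_of x \in T -> touch T C.
Proof. by move=> h1 h2; apply/touchP; exists x. Qed.

Lemma ar1 a c : (0 < a -> a - (c + 1) < a)%N.
Proof. lia. Qed.

Lemma ar2 a1 a2 a3 z v u s : (a1 + a2 <= a3 -> z + s < a2 -> a3 = v + s ->
  z = v - (u + 1) -> u + 1 <= v -> a1 <= u)%N.
Proof. lia. Qed.

Lemma ld_bound F V0 s v b :
  relLean F V0 -> cnt F V0 = (#|`V0| + s)%N ->
  (forall T, T `<=` V0 -> T != fset0 -> (#|`T| < #|`V0|)%N -> (#|`T| + s < cnt F T)%N) ->
  v \in V0 -> (ld F (v, b) <= s)%N.
Proof.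
move=> hL hc hmin vV.
rewrite leqNgt; apply/negP => hx.
pose x : lit := (v, b).
pose W := V0 `\` [fset v].
have sW : W `<=` V0 by exact: fsubsetDl.
have cW : #|`W| = (#|`V0| - 1)%N.
  by rewrite /W cardD_sub ?fsub1set // cardfs1.
have V0pos : (0 < #|`V0|)%N by rewrite cardfs_gt0; apply/fset0Pn; exists v.
pose K := [seq C <- F | touch V0 C && (x \notin C)].
have xV : forall C, x \in C -> touch V0 C by move=> C h; exact: touch_lit h vV.
have HK : forall U, U `<=` W -> (count (inside W U) K <= #|`U|)%N.
  move=> U sU; rewrite count_filter.
  have h0 := @count_add_le F (fun C => touch V0 C && (x \notin C)) (fun C => x \in C) (touch V0).
  have h1 : (count (fun C => touch V0 C && (x \notin C)) F + count (fun C => x \in C) F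
             <= count (touch V0) F)%N.
    apply: h0 => C _ /=; case xC: (x \in C) => /=; first by rewrite andbF (xV _ xC).
    by rewrite andbT; case: (touch V0 C).
  rewrite /ld /cnt in hx hc h1.
  case: (eqVneq U W) => [->|UW].
    apply: leq_trans (_ : _ <= count (fun C => touch V0 C && (x \notin C)) F)%N _.
      by apply: count_le => C _ /andP [].
    move: h1 hx hc cW V0pos; move: (count _ F) (count (fun C => x \in C) F) (count (touch V0) F) => a1 a2 a3.
    lia.
  pose Z := W `\` U.
  have sZ : Z `<=` W by exact: fsubsetDl.
  have cZ : #|`Z| = (#|`W| - #|`U|)%N by exact: cardD_sub.
  have ltU : (#|`U| < #|`W|)%N by apply: fproper_ltn_card; rewrite fproperEneq UW sU.
  have Z0 : Z != fset0 by rewrite -cardfs_gt0 cZ; lia.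
  have hZ := hmin Z (fsubset_trans sZ sW) Z0 (ltac:(lia)).
  have hZU : forall u, u \in Z -> u \notin U by move=> u; rewrite inE; case/andP.
  have h2 := @count_add_le F (predI (inside W U) (fun C => touch V0 C && (x \notin C))) (touch Z) (touch V0).
  have h3 : (count (predI (inside W U) (fun C => touch V0 C && (x \notin C))) F + count (touch Z) F
             <= count (touch V0) F)%N.
    apply: h2 => C _ /=.
    case h1': (inside W U C) => /=; last first.
      by case hz: (touch Z C) => //; rewrite (touch_sub (fsubset_trans sZ sW) hz).
    have := notouch sZ hZU h1'.
    by move=> /negbTE ->; case: (touch V0 C); case: (x \in C).
  rewrite /cnt in hZ.
  move: h3 hZ hc cZ cW ltU.
  move: (count (predI _ _) F) (count (touch Z) F) (count (touch V0) F) => a1 a2 a3.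
  lia.
have [f2 Hf2] := hall (n := #|`W|) (leqnn _) HK.
pose f := fun u => if u == v then b else f2 u.
apply: (hL V0 f (fsubset_refl _) (ltac:(apply/fset0Pn; by exists v))) => C CF hCT.
case xC: (x \in C).
  exists x => //; by rewrite /sat_lit /= vV /f !eqxx.
have CK : C \in K. rewrite /K mem_filter CF andbT. apply/andP; split => //. by rewrite xC.
have [y yC /andP [yW fy]] := Hf2 C CK.
move: yW; rewrite !inE => /andP [yv yV].
exists y => //; rewrite /sat_lit yV /f (negbTE yv) //.
Qed.

Lemma lean_H F V0 s v b :
  relLean F V0 -> cnt F V0 = (#|`V0| + s)%N ->
  (forall T, T `<=` V0 -> T != fset0 -> (#|`T| < #|`V0|)%N -> (#|`T| + s < cnt F T)%N) ->
  v \in V0 -> relLean [seq C <- F | (v, b) \notin C] (V0 `\` [fset v]).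
Proof.
move=> hL hc hmin vV D f1 sD D0 Hsat.
pose x : lit := (v, b).
pose W := V0 `\` [fset v].
have sW : W `<=` V0 by exact: fsubsetDl.
have sDV : D `<=` V0 by exact: fsubset_trans sD sW.
have vD : v \notin D.
  apply/negP => vD; have := fsubsetP sD _ vD; rewrite !inE eqxx //.
pose T' := W `\` D.
have sT' : T' `<=` W by exact: fsubsetDl.
pose K := [seq C <- F | touch V0 C && ~~ touch D C && (x \notin C)].
have HK : forall U, U `<=` T' -> (count (inside T' U) K <= #|`U|)%N.
  move=> U sU; rewrite count_filter.
  have vU : v \notin U.
    apply/negP => vU; have := fsubsetP (fsubset_trans sU sT') _ vU; rewrite !inE eqxx //.
  have sUV : v |` U `<=` V0.
    rewrite fsubUset fsub1set vV /=; exact: fsubset_trans sU (fsubset_trans sT' sW).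
  pose Z := V0 `\` (v |` U).
  have sZ : Z `<=` V0 by exact: fsubsetDl.
  have cZ : #|`Z| = (#|`V0| - (#|`U| + 1))%N.
    by rewrite /Z cardD_sub // cardfsU1 vU addnC.
  have sDZ : D `<=` Z.
    apply/fsubsetP => u uD; rewrite !inE (fsubsetP sDV _ uD) andbT.
    have := fsubsetP sD _ uD; rewrite !inE => /andP [uv _]; rewrite negb_or uv /=.
    apply/negP => uU; have := fsubsetP sU _ uU; rewrite !inE uD //.
  have cD := card_le_sub sDZ.
  have D0' : (0 < #|`D|)%N by rewrite cardfs_gt0.
  have V0le := card_le_sub sUV.
  have Z0 : Z != fset0 by rewrite -cardfs_gt0; exact: leq_trans D0' cD.
  have V0pos : (0 < #|`V0|)%N by apply: leq_trans D0' (card_le_sub sDV).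
  have ltZ : (#|`Z| < #|`V0|)%N.
    rewrite cZ; exact: ar1.
  have hZ := hmin Z sZ Z0 ltZ.
  have h2 := @count_add_le F (predI (inside T' U)
      (fun C => touch V0 C && ~~ touch D C && (x \notin C))) (touch Z) (touch V0).
  have h3 : (count (predI (inside T' U)
      (fun C => touch V0 C && ~~ touch D C && (x \notin C))) F + count (touch Z) F
             <= count (touch V0) F)%N.
    apply: h2 => C _ /=.
    case h1': (inside T' U C) => /=; last first.
      by case hz: (touch Z C) => //; rewrite (touch_sub sZ hz).
    case tD: (touch D C) => /=.
      by rewrite andbF /=; case hz: (touch Z C) => //; rewrite (touch_sub sZ hz).
    rewrite andbT.
    case tZ: (touch Z C); last by case: (touch V0 C); case: (x \in C).
    exfalso; move/touchP: tZ => [y yC]; rewrite !inE => /andP [/norP [yv yU] yV].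
    case yD: (var_of y \in D).
      by move: tD; rewrite (touch_lit yC yD).
    have := (insideP _ _ _ h1' y yC); rewrite !inE yD yv yV /= => /(_ isT).
    by rewrite (negbTE yU).
  rewrite /cnt in hZ hc.
  move: V0le; rewrite cardfsU1 vU addnC => V0le.
  exact: ar2 h3 hZ hc cZ V0le.
have [f2 Hf2] := hall (n := #|`T'|) (leqnn _) HK.
pose f := fun u => if u \in D then f1 u else if u == v then b else f2 u.
apply: (hL V0 f (fsubset_refl _) (ltac:(apply/fset0Pn; by exists v))) => C CF hCT.
case xC: (x \in C).
  exists x => //; by rewrite /sat_lit /= vV /f (negbTE vD) !eqxx.
case tD: (touch D C).
  have := Hsat C; rewrite mem_filter CF andbT.
  have -> : (v, b) \notin C by rewrite -/x xC.
  move=> /(_ isT tD) [y yC /andP [yD fy]].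
  exists y => //; by rewrite /sat_lit (fsubsetP sDV _ yD) /f yD.
have CK : C \in K.
  rewrite /K mem_filter CF andbT; apply/andP; split; first by rewrite hCT tD.
  by rewrite xC.
have [y yC /andP [yT fy]] := Hf2 C CK.
move: yT; rewrite !inE => /andP [yD /andP [yv yV]].
exists y => //; by rewrite /sat_lit yV /f (negbTE yD) (negbTE yv).
Qed.


Lemma not_both F C v : is_mcls F -> C \in F -> poslit v \in C -> neglit v \in C -> False.
Proof.
move=> HF CF hp hn; have := HF C CF _ hp; rewrite /compl /poslit /= hn //.
Qed.

Lemma touch1 v C : touch [fset v] C = (poslit v \in C) || (neglit v \in C).
Proof.
apply/touchP/orP.
  move=> [[u c] yC]; rewrite inE /var_of /= => /eqP uv; subst u.
  by case: c yC => h; [left|right].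
by case=> h; [exists (poslit v) | exists (neglit v)]; rewrite // /var_of !inE.
Qed.

Lemma vdeg_cnt1 F v : is_mcls F -> cnt F [fset v] = vdeg F v.
Proof.
move=> HF; rewrite /cnt /vdeg /ld.
rewrite (eq_count (a1 := touch [fset v]) (a2 := predU (fun C => poslit v \in C) (fun C => neglit v \in C))); last first.
  by move=> C; exact: touch1.
have := count_predUI (fun C => poslit v \in C) (fun C => neglit v \in C) F.
have -> : count (predI (fun C => poslit v \in C) (fun C => neglit v \in C)) F = 0.
  apply/eqP; rewrite -leqn0.
  apply: leq_trans (count_le (q := pred0) _) _; last by rewrite count_pred0.
  move=> C CF /andP [h1 h2]; case: (not_both HF CF h1 h2).
by rewrite addn0.
Qed.

Lemma count_split (a b : pred clause) (s : mcls) :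
  count a s = (count (predI a b) s + count (predI a (predC b)) s)%N.
Proof. elim: s => //= C s ->; case: (a C); case: (b C) => /=; lia. Qed.

Lemma vdeg_H F x w : is_mcls F ->
  (vdeg F w <= vdeg [seq C <- F | x \notin C] w + ld F x)%N.
Proof.
move=> HF; rewrite /vdeg /ld !count_filter.
rewrite (count_split (fun C => poslit w \in C) (fun C => x \notin C) F).
rewrite (count_split (fun C => neglit w \in C) (fun C => x \notin C) F).
have := @count_add_le F (predI (fun C => poslit w \in C) (predC (fun C => x \notin C)))
   (predI (fun C => neglit w \in C) (predC (fun C => x \notin C))) (fun C => x \in C).
move=> /(_ _) H.
have: (count (predI (fun C => poslit w \in C) (predC (fun C => x \notin C))) F +
   count (predI (fun C => neglit w \in C) (predC (fun C => x \notin C))) F <=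
   count (fun C => x \in C) F)%N.
  apply: H => C CF /=; rewrite negbK.
  case hp: (poslit w \in C); case hn: (neglit w \in C) => /=; try by case: (x \in C).
  by exfalso; exact: not_both HF CF hp hn.
move: (count _ F) (count _ F) (count _ F) (count _ F) (count _ F) => a1 a2 a3 a4 a5.
lia.
Qed.

Lemma cnt_H F x W V0 : W `<=` V0 -> var_of x \in V0 ->
  (cnt [seq C <- F | x \notin C] W + ld F x <= cnt F V0)%N.
Proof.
move=> sW xV; rewrite /cnt /ld count_filter.
apply: count_add_le => C _ /=.
case xC: (x \in C) => /=; first by rewrite andbF (touch_lit xC xV).
rewrite andbT; case h: (touch W C) => //; by rewrite (touch_sub sW h).
Qed.

Lemma get_min F V : relLean F V -> V != fset0 ->
  exists s, (forall T, T `<=` V -> T != fset0 -> (#|`T| + s <= cnt F T)%N) /\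
            (exists T, [/\ T `<=` V, T != fset0 & cnt F T = (#|`T| + s)%N]).
Proof.
move=> hL V0.
have hV : cnt F V = (#|`V| + (cnt F V - #|`V|))%N.
  by rewrite subnKC //; exact: ltnW (pos hL (fsubset_refl _) V0).
have [m [[T [sT T0 hT]] hm]] := @ex_min_nat
  (fun m => exists T, [/\ T `<=` V, T != fset0 & cnt F T = (#|`T| + m)%N])
  (ex_intro _ (cnt F V - #|`V|)%N (ex_intro _ V (And3 (fsubset_refl _) V0 hV))).
exists m; split; last by exists T.
move=> T' sT' T0'.
have h := pos hL sT' T0'.
have : (m <= cnt F T' - #|`T'|)%N.
  apply: hm; exists T'; split => //; lia.
lia.
Qed.


Lemma is_mcls_filter F (p : pred clause) : is_mcls F -> is_mcls [seq C <- F | p C].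
Proof. by move=> HF C; rewrite mem_filter => /andP [_ CF]; exact: HF. Qed.

Lemma ar3 i j s : (j <= i -> i <= 1 -> 0 < s -> i + j <= Nfun s)%N.
Proof. move=> h1 h2 h3; have [_ h] := Nfun_ge h3; lia. Qed.

Lemma main n : forall (F : mcls) (V : {fset var}) (s : nat), is_mcls F -> (#|`V| <= n)%N -> V != fset0 -> relLean F V ->
  (forall T, T `<=` V -> T != fset0 -> (#|`T| + s <= cnt F T)%N) ->
  (exists T, [/\ T `<=` V, T != fset0 & cnt F T = (#|`T| + s)%N]) ->
  exists2 v, v \in V & [/\ (vdeg F v <= Nfun s)%N, (ld F (poslit v) <= s)%N
                        & (ld F (neglit v) <= s)%N].
Proof.
elim: n => [|n IH] F V s HF hV Vne hL hge hatt.
  by move: Vne; rewrite -cardfs_gt0; move: hV; case: (#|`V|).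
have s1 : (0 < s)%N.
  move: hatt => [T [sT T0 hT]]; have := pos hL sT T0; rewrite hT; lia.
have [V0 [[sV0 V00 hc0] hV0min]] := ex_min_card hatt.
have hmin : forall T, T `<=` V0 -> T != fset0 -> (#|`T| < #|`V0|)%N ->
            (#|`T| + s < cnt F T)%N.
  move=> T sT T0 lt; have sTV := fsubset_trans sT sV0.
  have := hge T sTV T0; rewrite leq_eqVlt => /orP [/eqP h|//].
  have := hV0min T (And3 sTV T0 (esym h)); lia.
have hL0 := relLean_sub sV0 hL.
have ldb : forall u b, u \in V0 -> (ld F (u, b) <= s)%N.
  by move=> u b uV; exact: ld_bound hL0 hc0 hmin uV.
have [v vV0] := fset0Pn _ V00.
have vV := fsubsetP sV0 _ vV0.
pose b := (ld F (v, false) <= ld F (v, true))%N.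
pose x : lit := (v, b).
have hvdeg : vdeg F v = (ld F x + ld F (v, ~~ b))%N.
  by rewrite /vdeg /x /poslit /neglit; case: (b) => /=; rewrite // addnC.
have hij : (ld F (v, ~~ b) <= ld F x)%N.
  rewrite /x /b; case: (leqP (ld F (v, false)) (ld F (v, true))) => h /=; [exact: h | exact: ltnW].
have hi : (ld F x <= s)%N by exact: ldb.
have V0pos : (0 < #|`V0|)%N by rewrite cardfs_gt0.
case: (leqP #|`V0| 1) => hV01.
  have eV0 : V0 = [fset v].
    apply/eqP; rewrite eq_sym eqEfcard fsub1set vV0 cardfs1 //.
  exists v => //; split; try by apply: ldb.
  rewrite -vdeg_cnt1 // -eV0 hc0.
  have [h _] := Nfun_ge s1; move: h hV01; move: (#|`V0|) => a; lia.
pose W := V0 `\` [fset v].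
have sW : W `<=` V0 by exact: fsubsetDl.
have cW : #|`W| = (#|`V0| - 1)%N by rewrite /W cardD_sub ?fsub1set // cardfs1.
have W0 : W != fset0 by rewrite -cardfs_gt0 cW; move: hV01; move: (#|`V0|) => a; lia.
pose H := [seq C <- F | x \notin C].
have hLH : relLean H W by exact: lean_H hL0 hc0 hmin vV0.
have [s' [hge' hatt']] := get_min hLH W0.
have s'1 : (0 < s')%N.
  move: hatt' => [T [sT T0 hT]]; have := pos hLH sT T0; rewrite hT; lia.
have hWn : (#|`W| <= n)%N.
  have := card_le_sub sV0; move: hV cW hV01; move: (#|`V|) (#|`V0|) (#|`W|) => a c d.
  lia.
have [w wW [hw _ _]] := IH H W s' (@is_mcls_filter F (fun C => x \notin C) HF) hWn W0 hLH hge' hatt'.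
have wV0 := fsubsetP sW _ wW.
have hcH := @cnt_H F x W V0 sW vV0.
have hs' : (s' <= s - ld F x + 1)%N.
  have := hge' W (fsubset_refl _) W0; rewrite -/H in hcH.
  move: hcH hc0 cW hV01; move: (cnt H W) (ld F x) (#|`V0|) (#|`W|) (cnt F V0) => a c d e g.
  lia.
have hvw : (vdeg F w <= Nfun (s - ld F x + 1) + ld F x)%N.
  apply: leq_trans (vdeg_H x w HF) _; rewrite -/H leq_add2r.
  apply: leq_trans hw _; exact: Nfun_mono.
case: (leqP (ld F x) 1) => hi1.
  exists v => //; split; try by apply: ldb.
  rewrite hvdeg; exact: ar3.
have := Nfun_term (k := s) (i := ld F x) (ltac:(by rewrite hi1 hi)).
rewrite geq_min => /orP [h|h].
  exists v => //; split; try by apply: ldb.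
  rewrite hvdeg; apply: leq_trans h; move: hij; move: (ld F x) (ld F _) => a c; lia.
exists w; first exact: fsubsetP sV0 _ wV0.
split; try by apply: ldb.
exact: leq_trans hvw h.
Qed.


Unset Implicit Arguments. Set Strict Implicit. Set Printing Implicit Defensive.
Local Close Scope fset_scope.
Local Open Scope ring_scope.


Lemma bigmin_lb (ts : seq {fset var}) (P : pred {fset var}) (g : {fset var} -> int) (x0 m : int) :
  m <= x0 -> (forall T, T \in ts -> P T -> m <= g T) ->
  m <= \big[Order.min/x0]_(T <- ts | P T) g T.
Proof.
move=> h0; elim: ts => [|a ts IH] H; first by rewrite big_nil.
rewrite big_cons; case: ifP => Pa.
  rewrite le_min H ?mem_head //=; apply: (IH) => T Tts PT; apply: H => //; by rewrite inE Tts orbT.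
apply: (IH) => T Tts PT; apply: H => //; by rewrite inE Tts orbT.
Qed.

Lemma bigmin_ub (ts : seq {fset var}) (P : pred {fset var}) (g : {fset var} -> int) (x0 : int) T :
  T \in ts -> P T -> \big[Order.min/x0]_(T <- ts | P T) g T <= g T.
Proof.
elim: ts => [|a ts IH] //; rewrite inE => /orP [/eqP <-|Tts] PT; rewrite big_cons.
  by rewrite PT ge_min lexx.
case: ifP => Pa; last exact: IH.
by rewrite ge_min IH // orbT.
Qed.

Lemma lean_rel F : lean F -> relLean F (vars F).
Proof.
move=> hL D f sD D0 Hs.
have := hL D f; rewrite /autarky.
have -> : (D `&` vars F = D)%fset by apply/fsetIidPl.
move=> /(_ _) h; move/eqP: D0; apply; apply: h => C CF [x xC /andP [xD _]].
exact: Hs CF (touch_lit xC xD).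
Qed.

Theorem theorem9p10 (F : mcls) (HF : is_mcls F) (Hlean : lean F)
  (Hn : (0 < nvar F)%N) :
  exists2 v, v \in vars F &
    [/\ (vdeg F v <= Nfun `|surplus F|%N)%N,
        (ld F (poslit v))%:Z <= surplus F
      & (ld F (neglit v))%:Z <= surplus F].
Proof.
have Vne : (vars F != fset0)%fset by rewrite -cardfs_gt0.
have hL := @lean_rel F Hlean.
have [s [hge hatt]] := get_min hL Vne.
have hsur : surplus F = s%:Z.
  rewrite /surplus ifF; last by apply/negbTE; rewrite -lt0n.
  apply/eqP; rewrite eq_le; apply/andP; split.
    move: hatt => [T [sT T0 hT]].
    have hmem : T \in enum_fset (fpowerset (vars F)).
      by rewrite (_ : (T \in enum_fset _) = (T \in fpowerset (vars F))) // fpowersetE.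
    apply: le_trans (bigmin_ub _ (fun V => V != fset0)%fset (surplus_of F) (surplus_of F (vars F)) _ hmem T0) _.
    rewrite /surplus_of -/(cnt F T) hT; lia.
  apply: bigmin_lb.
    rewrite /surplus_of -/(cnt F (vars F)); have := hge _ (fsubset_refl _) Vne; lia.
  move=> T; rewrite (_ : (T \in enum_fset _) = (T \in fpowerset (vars F))) // fpowersetE.
  move=> sT T0; rewrite /surplus_of -/(cnt F T); have := hge _ sT T0; lia.
have [v vV [h1 h2 h3]] := main (n := #|`vars F|) HF (leqnn _) Vne hL hge hatt.
exists v => //; rewrite hsur absz_nat; split => //; lia.
Qed.
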